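(* Let $f:\mathbb{R}^+\to\mathbb{R}$ be twice continuously differentiable with $f>0$, $f'>0$, $f''>0$, and assume there exist $c_1\geq 1/2$ and $c_2>0$ such that $c_1f''(x)\leq f''(y)\leq c_2f''(x)$ for $0<x\leq y\leq 2x$. Then, with implied constants depending only on $f$: (i) $xf''(x)\ll yf''(y)$ for $0<x\leq y$; (ii) $xf''(x)\ll f'(x)\ll xf''(x)\log x$ for $x\geq 2$; (iii) $f'(x)\leq f'(y)\ll f'(x)$ for $0<x\leq y\leq 2x$; (iv) there is $\delta\geq 0$ such that $\log x\ll f'(x)\ll x^\delta$ for all $x\geq 2$; (v) for $0<x\leq a\leq b\leq 2x$ we have $f(b)-f(a)\asymp f'(x)(b-a)$ and $f'(b)-f'(a)\asymp f''(x)(b-a)$.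
   Context: $F\ll G$ means $|F|\leq C G$ for a constant $C$; $F\asymp G$ means $F\ll G$ and $G\ll F$. *)

(* Defs.v *)
From Stdlib Require Import Reals.
From Coquelicot Require Import Coquelicot.
Open Scope R_scope.

Definition C2_pos (f : R -> R) : Prop :=
  forall x, 0 < x ->
    ex_derive f x /\ ex_derive (Derive f) x /\
    continuous (Derive_n f 2) x.

(* Main.v *)
Require Import Defs.
From Stdlib Require Import Reals Lra Lia ZArith.
From Coquelicot Require Import Coquelicot.
Open Scope R_scope.

Lemma mvt_pos (h dh : R -> R) a b : 0 < a -> a <= b ->
  (forall t, 0 < t -> is_derive h t (dh t)) ->
  exists c, a <= c <= b /\ h b - h a = dh c * (b - a).
Proof.
  intros Ha Hab Hd.
  destruct (MVT_gen h a b dh) as [c [Hc E]].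
  - intros t Ht. apply Hd. rewrite Rmin_left in Ht; lra.
  - intros t Ht. rewrite Rmin_left in Ht by lra. apply continuity_pt_filterlim.
    apply (ex_derive_continuous (K:=R_AbsRing) (V:=R_NormedModule)). eexists. apply Hd. lra.
  - exists c. rewrite Rmin_left in Hc by lra. rewrite Rmax_right in Hc by lra. auto.
Qed.

Record Hyp (F F1 G : R -> R) (c1 c2 : R) : Prop := {
  hM1 : forall a b, 0 < a -> a <= b -> exists c, a <= c <= b /\ F b - F a = F1 c * (b - a);
  hM2 : forall a b, 0 < a -> a <= b -> exists c, a <= c <= b /\ F1 b - F1 a = G c * (b - a);
  hF1 : forall x, 0 < x -> 0 < F1 x;
  hG : forall x, 0 < x -> 0 < G x;
  hc1 : 1/2 <= c1;
  hc2 : 0 < c2;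
  hD : forall x y, 0 < x -> x <= y -> y <= 2 * x -> c1 * G x <= G y /\ G y <= c2 * G x }.

Section S.
Context (F F1 G : R -> R) (c1 c2 : R) (H : Hyp F F1 G c1 c2).

Lemma c1_le1 : c1 <= 1.
Proof.
  destruct (hD _ _ _ _ _ H 1 1 ltac:(lra) ltac:(lra) ltac:(lra)) as [A _].
  pose proof (hG _ _ _ _ _ H 1 ltac:(lra)). nra.
Qed.

Lemma mono x y : 0 < x -> x <= y -> F1 x <= F1 y.
Proof.
  intros Hx Hxy. destruct (hM2 _ _ _ _ _ H x y Hx Hxy) as [c [Hc E]].
  pose proof (hG _ _ _ _ _ H c ltac:(lra)). nra.
Qed.

Lemma dblstep x y : 0 < x -> x <= y -> y <= 2 * x -> c1 * (x * G x) <= y * G y.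
Proof.
  intros Hx Hxy Hy. destruct (hD _ _ _ _ _ H x y Hx Hxy Hy) as [A _].
  pose proof (hG _ _ _ _ _ H y ltac:(lra)). pose proof (hG _ _ _ _ _ H x ltac:(lra)).
  nra.
Qed.

Lemma part_i_n n : forall x y, 0 < x -> x <= y -> y <= 2 ^ n * x -> c1 * (x * G x) <= y * G y.
Proof.
  induction n as [|n IH]; intros x y Hx Hxy Hy.
  - simpl in Hy. apply dblstep; lra.
  - destruct (Rle_lt_dec y (2 * x)) as [Hl|Hl]. { apply dblstep; lra. }
    simpl in Hy.
    assert (A := IH (2 * x) y ltac:(lra) ltac:(lra) ltac:(lra)).
    destruct (hD _ _ _ _ _ H x (2*x) Hx ltac:(lra) ltac:(lra)) as [B _].
    pose proof (hG _ _ _ _ _ H x Hx). pose proof (hc1 _ _ _ _ _ H).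
    assert (2 * x * (c1 * G x) <= 2 * x * G (2 * x)) by (apply Rmult_le_compat_l; lra).
    assert (0 <= x * G x) by nra.
    assert (x * G x <= 2 * x * G (2 * x)) by nra.
    assert (c1 * (x * G x) <= c1 * (2 * x * G (2 * x))) by (apply Rmult_le_compat_l; lra).
    lra.
Qed.

Lemma pow2_gt n : INR n < 2 ^ n.
Proof.
  induction n as [|n IH]. simpl; lra.
  rewrite S_INR. simpl. assert (1 <= 2 ^ n) by (apply pow_R1_Rle; lra). lra.
Qed.

Lemma pow2_big x : exists n, x <= 2 ^ n.
Proof.
  destruct (archimed x) as [A _]. exists (Z.to_nat (up x)).
  pose proof (pow2_gt (Z.to_nat (up x))).
  destruct (Z.lt_ge_cases (up x) 0) as [H1|H1].
  - replace (Z.to_nat (up x)) with 0%nat in * by lia. simpl in *. apply IZR_lt in H1. lra.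
  - rewrite INR_IZR_INZ, Z2Nat.id in H0 by lia. lra.
Qed.

Lemma part_i x y : 0 < x -> x <= y -> x * G x <= (1 / c1) * (y * G y).
Proof.
  intros Hx Hxy. destruct (pow2_big (y / x)) as [n Hn].
  assert (y <= 2 ^ n * x). { apply (Rmult_le_compat_r x) in Hn; [|lra].
    unfold Rdiv in Hn. rewrite Rmult_assoc, Rinv_l in Hn; lra. }
  pose proof (part_i_n n x y Hx Hxy H0). pose proof (hc1 _ _ _ _ _ H).
  apply (Rmult_le_reg_l c1); [lra|]. field_simplify; lra.
Qed.

Ltac hyps := pose proof (hc1 _ _ _ _ _ H); pose proof (hc2 _ _ _ _ _ H); pose proof c1_le1.

Lemma lowerF1 x : 0 < x -> x * G x <= 2 * c2 * F1 x.
Proof.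
  intros Hx. hyps.
  destruct (hM2 _ _ _ _ _ H (x/2) x ltac:(lra) ltac:(lra)) as [c [Hc E]].
  destruct (hD _ _ _ _ _ H c x ltac:(lra) ltac:(lra) ltac:(lra)) as [_ B].
  pose proof (hF1 _ _ _ _ _ H (x/2) ltac:(lra)).
  assert (x * G x <= x * (c2 * G c)) by (apply Rmult_le_compat_l; lra).
  nra.
Qed.

Definition K := 1 + 2 * c2 ^ 2.

Lemma upperiii x y : 0 < x -> x <= y -> y <= 2 * x -> F1 y <= K * F1 x.
Proof.
  intros Hx Hxy Hy. hyps. unfold K.
  destruct (hM2 _ _ _ _ _ H x y Hx Hxy) as [c [Hc E]].
  destruct (hD _ _ _ _ _ H x c Hx ltac:(lra) ltac:(lra)) as [_ B].
  pose proof (lowerF1 x Hx). pose proof (hG _ _ _ _ _ H c ltac:(lra)).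
  pose proof (hG _ _ _ _ _ H x ltac:(lra)).
  assert (G c * (y - x) <= c2 * G x * x) by (apply Rmult_le_compat; nra).
  assert (c2 * (x * G x) <= c2 * (2 * c2 * F1 x)) by (apply Rmult_le_compat_l; lra).
  nra.
Qed.

Definition E := c2 / c1 ^ 2.

Lemma stepE t x : 0 < t -> t <= x -> F1 t - F1 (t/2) <= E * (x * G x).
Proof.
  intros Ht Htx. hyps. unfold E.
  destruct (hM2 _ _ _ _ _ H (t/2) t ltac:(lra) ltac:(lra)) as [c [Hc Eq]].
  destruct (hD _ _ _ _ _ H (t/2) c ltac:(lra) ltac:(lra) ltac:(lra)) as [_ B].
  pose proof (dblstep (t/2) t ltac:(lra) ltac:(lra) ltac:(lra)).
  pose proof (part_i t x Ht Htx).
  pose proof (hG _ _ _ _ _ H c ltac:(lra)).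
  pose proof (hG _ _ _ _ _ H (t/2) ltac:(lra)).
  rewrite Eq.
  assert (G c * (t - t/2) <= c2 * G (t/2) * (t/2)) by (apply Rmult_le_compat; nra).
  assert (c2 * G (t/2) * (t/2) <= c2 / c1 * (t * G t)).
  { apply (Rmult_le_reg_l c1); [lra|]. field_simplify; [|lra]. nra. }
  assert (c2 / c1 * (t * G t) <= c2 / c1 * (1 / c1 * (x * G x))).
  { apply Rmult_le_compat_l; [apply Rlt_le, Rdiv_lt_0_compat; lra| lra]. }
  replace (c2 / c1 ^ 2 * (x * G x)) with (c2 / c1 * (1 / c1 * (x * G x))) by (field; lra).
  lra.
Qed.

Lemma Pn n : forall x, 0 < x -> F1 x <= F1 (x / 2 ^ n) + INR n * E * (x * G x).
Proof.
  induction n as [|n IH]; intros x Hx.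
  - simpl. replace (x/1) with x by field. lra.
  - pose proof (IH x Hx). assert (0 < 2 ^ n) by (apply pow_lt; lra).
    assert (x / 2 ^ n <= x).
    { unfold Rdiv. rewrite <- (Rmult_1_r x) at 2. apply Rmult_le_compat_l; [lra|].
      rewrite <- Rinv_1. apply Rinv_le_contravar; [lra|]. apply pow_R1_Rle; lra. }
    assert (0 < x / 2 ^ n) by (apply Rdiv_lt_0_compat; lra).
    pose proof (stepE (x / 2^n) x H3 H2).
    replace (x / 2 ^ S n) with (x / 2 ^ n / 2) by (simpl; field; lra).
    rewrite S_INR. lra.
Qed.

Lemma floor2 x : 1 <= x -> exists m, 2 ^ m <= x < 2 ^ (S m).
Proof.
  intros Hx. destruct (pow2_big (2 * x)) as [N HN].
  assert (forall N, x < 2 ^ N -> exists m, 2 ^ m <= x < 2 ^ (S m)).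
  { clear N HN. induction N as [|N IH]; intros HN.
    - simpl in HN; lra.
    - destruct (Rlt_le_dec x (2 ^ N)) as [A|A]. now apply IH. exists N. lra. }
  apply (H0 N). lra.
Qed.

Definition L := c1 ^ 2 * G 1.

Lemma lowerlog n : forall x, 2 ^ n <= x -> INR n * L <= F1 x.
Proof.
  hyps. assert (0 < G 1) by (apply (hG _ _ _ _ _ H); lra).
  induction n as [|n IH]; intros x Hx.
  - simpl in *. pose proof (hF1 _ _ _ _ _ H x ltac:(lra)). lra.
  - simpl in Hx. assert (1 <= 2 ^ n) by (apply pow_R1_Rle; lra).
    pose proof (IH (x/2) ltac:(lra)).
    destruct (hM2 _ _ _ _ _ H (x/2) x ltac:(lra) ltac:(lra)) as [c [Hc Eq]].
    destruct (hD _ _ _ _ _ H (x/2) c ltac:(lra) ltac:(lra) ltac:(lra)) as [B _].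
    pose proof (part_i 1 (x/2) ltac:(lra) ltac:(lra)).
    pose proof (hG _ _ _ _ _ H (x/2) ltac:(lra)).
    assert (c1 * G (x/2) * (x/2) <= G c * (x - x/2)) by (apply Rmult_le_compat; nra).
    assert (L <= c1 * G (x/2) * (x/2)).
    { unfold L. replace (c1 * G (x/2) * (x/2)) with (c1 * ((x/2) * G (x/2))) by ring.
      replace (c1 ^ 2 * G 1) with (c1 * (c1 * (1 * G 1))) by ring.
      apply Rmult_le_compat_l; [lra|].
      apply (Rmult_le_reg_l (1/c1)). apply Rdiv_lt_0_compat; lra.
      replace (1 / c1 * (c1 * (1 * G 1))) with (1 * G 1) by (field; lra). lra. }
    rewrite S_INR. lra.
Qed.

Lemma upperpow n : forall x, 0 < x -> x <= 2 ^ n -> F1 x <= K ^ n * F1 1.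
Proof.
  hyps. assert (1 <= K) by (unfold K; nra).
  induction n as [|n IH]; intros x Hx Hxn.
  - simpl in *. pose proof (mono x 1 Hx Hxn). lra.
  - pose proof (hF1 _ _ _ _ _ H 1 ltac:(lra)).
    assert (0 <= K ^ n * F1 1) by (apply Rmult_le_pos; [apply pow_le|]; lra).
    destruct (Rle_lt_dec x (2 ^ n)) as [A|A].
    + pose proof (IH x Hx A). simpl. nra.
    + simpl in Hxn. pose proof (IH (x/2) ltac:(lra) ltac:(lra)).
      pose proof (upperiii (x/2) x ltac:(lra) ltac:(lra) ltac:(lra)).
      simpl. assert (K * F1 (x/2) <= K * (K ^ n * F1 1)) by (apply Rmult_le_compat_l; lra).
      lra.
Qed.

End S.

Theorem lemma7 (f : R -> R)
  (hC2 : C2_pos f)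
  (hf : forall x, 0 < x -> 0 < f x)
  (hf1 : forall x, 0 < x -> 0 < Derive f x)
  (hf2 : forall x, 0 < x -> 0 < Derive_n f 2 x)
  (hreg : exists c1 c2, 1/2 <= c1 /\ 0 < c2 /\
     forall x y, 0 < x -> x <= y -> y <= 2 * x ->
       c1 * Derive_n f 2 x <= Derive_n f 2 y /\
       Derive_n f 2 y <= c2 * Derive_n f 2 x) :
  (* (i) *)
  (exists C, forall x y, 0 < x -> x <= y ->
     Rabs (x * Derive_n f 2 x) <= C * (y * Derive_n f 2 y)) /\
  (* (ii) *)
  (exists C, forall x, 2 <= x ->
     Rabs (x * Derive_n f 2 x) <= C * Derive f x /\
     Rabs (Derive f x) <= C * (x * Derive_n f 2 x * ln x)) /\
  (* (iii) *)
  (forall x y, 0 < x -> x <= y -> y <= 2 * x -> Derive f x <= Derive f y) /\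
  (exists C, forall x y, 0 < x -> x <= y -> y <= 2 * x ->
     Rabs (Derive f y) <= C * Derive f x) /\
  (* (iv) *)
  (exists delta, 0 <= delta /\ exists C, forall x, 2 <= x ->
     Rabs (ln x) <= C * Derive f x /\
     Rabs (Derive f x) <= C * Rpower x delta) /\
  (* (v) *)
  (exists C, forall x a b, 0 < x -> x <= a -> a <= b -> b <= 2 * x ->
     Rabs (f b - f a) <= C * (Derive f x * (b - a)) /\
     Rabs (Derive f x * (b - a)) <= C * (f b - f a) /\
     Rabs (Derive f b - Derive f a) <= C * (Derive_n f 2 x * (b - a)) /\
     Rabs (Derive_n f 2 x * (b - a)) <= C * (Derive f b - Derive f a)).
Proof.
  destruct hreg as [c1 [c2 [Hc1 [Hc2 HD]]]].
  set (G := Derive_n f 2) in *. set (F1 := Derive f) in *.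
  assert (H : Hyp f F1 G c1 c2).
  { constructor; auto.
    - intros a b Ha Hab. apply mvt_pos; auto. intros t Ht.
      apply Derive_correct. apply (hC2 t Ht).
    - intros a b Ha Hab. apply mvt_pos; auto. intros t Ht.
      apply (Derive_correct (Derive f)). apply (hC2 t Ht). }
  clearbody G F1.
  pose proof (c1_le1 _ _ _ _ _ H).
  assert (HG1 : 0 < G 1) by (apply hf2; lra).
  assert (HF11 : 0 < F1 1) by (apply hf1; lra).
  assert (ln2 : 0 < ln 2) by (rewrite <- ln_1; apply ln_increasing; lra).
  split; [|split; [|split; [|split; [|split]]]].
  - exists (1 / c1). intros x y Hx Hxy. rewrite Rabs_pos_eq.
    + now apply (part_i _ _ _ _ _ H).
    + pose proof (hf2 x Hx). nra.
  - set (A := F1 1 / (c1 * G 1 * ln 2)).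
    assert (HE : 0 < E c1 c2) by (unfold E; apply Rdiv_lt_0_compat; nra).
    assert (HA : 0 < A) by (unfold A; apply Rdiv_lt_0_compat; [lra|]; apply Rmult_lt_0_compat; nra).
    assert (0 < 2 * E c1 c2 / ln 2) by (apply Rdiv_lt_0_compat; lra).
    exists (2 * c2 + A + 2 * E c1 c2 / ln 2). intros x Hx.
    pose proof (hf1 x ltac:(lra)). pose proof (hf2 x ltac:(lra)).
    set (P := x * G x). assert (HP : 0 < P) by (unfold P; nra).
    pose proof (lowerF1 _ _ _ _ _ H x ltac:(lra)) as HL.
    split.
    { rewrite Rabs_pos_eq by lra. fold P in HL.
      assert (0 <= (A + 2 * E c1 c2 / ln 2) * F1 x) by (apply Rmult_le_pos; lra).
      replace ((2 * c2 + A + 2 * E c1 c2 / ln 2) * F1 x) with (2 * c2 * F1 x + (A + 2 * E c1 c2 / ln 2) * F1 x) by ring. lra. }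
    rewrite Rabs_pos_eq by lra.
    destruct (floor2 x ltac:(lra)) as [m [Hm1 Hm2]].
    destruct m as [|m']. { simpl in Hm2; lra. }
    set (m := S m') in *.
    assert (HmR : 1 <= INR m) by (unfold m; rewrite S_INR; pose proof (pos_INR m'); lra).
    assert (Hl : INR m * ln 2 <= ln x).
    { rewrite <- ln_pow by lra. apply ln_le; [apply pow_lt; lra| lra]. }
    assert (Hl2 : ln 2 <= ln x) by (apply ln_le; lra).
    pose proof (Pn _ _ _ _ _ H (S m) x ltac:(lra)) as HPn.
    assert (0 < 2 ^ S m) by (apply pow_lt; lra).
    assert (H6 : x / 2 ^ S m <= 1).
    { apply (Rmult_le_reg_r (2 ^ S m)); [lra|]. unfold Rdiv. rewrite Rmult_assoc, Rinv_l; lra. }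
    assert (H7 : 0 < x / 2 ^ S m) by (apply Rdiv_lt_0_compat; lra).
    pose proof (mono _ _ _ _ _ H _ 1 H7 H6).
    fold P in HPn.
    pose proof (part_i _ _ _ _ _ H 1 x ltac:(lra) ltac:(lra)) as H9. fold P in H9.
    assert (c1 * G 1 <= P).
    { apply (Rmult_le_reg_l (1/c1)). apply Rdiv_lt_0_compat; lra.
      replace (1 / c1 * (c1 * G 1)) with (1 * G 1) by (field; lra). lra. }
    assert (c1 * G 1 * ln 2 <= P * ln x) by (apply Rmult_le_compat; nra).
    assert (F1 1 <= A * (P * ln x)).
    { replace (F1 1) with (A * (c1 * G 1 * ln 2)) by (unfold A; field; nra).
      apply Rmult_le_compat_l; lra. }
    assert (INR (S m) <= 2 * ln x / ln 2).
    { rewrite S_INR. apply (Rmult_le_reg_r (ln 2)); [lra|].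
      replace (2 * ln x / ln 2 * ln 2) with (2 * ln x) by (field; lra). nra. }
    assert (H13 : INR (S m) * E c1 c2 * P <= 2 * ln x / ln 2 * E c1 c2 * P).
    { apply Rmult_le_compat_r; [lra|]. apply Rmult_le_compat_r; lra. }
    replace (2 * ln x / ln 2 * E c1 c2 * P) with (2 * E c1 c2 / ln 2 * (P * ln x)) in H13 by (field; lra).
    assert (0 <= 2 * c2 * (P * ln x)) by (apply Rmult_le_pos; nra).
    unfold P in *. lra.
  - intros x y Hx Hxy _. now apply (mono _ _ _ _ _ H).
  - exists (K c2). intros x y Hx Hxy Hy. rewrite Rabs_pos_eq.
    + now apply (upperiii _ _ _ _ _ H).
    + pose proof (hf1 y ltac:(lra)). lra.
  - set (Kc := K c2). assert (HK : 1 <= Kc) by (unfold Kc, K; nra).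
    assert (HlK : 0 <= ln Kc) by (rewrite <- ln_1; apply ln_le; lra).
    exists (ln Kc / ln 2). split. { apply Rmult_le_pos; [lra|]. apply Rlt_le, Rinv_0_lt_compat; lra. }
    assert (HLp : 0 < L G c1) by (unfold L; apply Rmult_lt_0_compat; [apply pow_lt|]; lra).
    assert (0 < 2 * ln 2 / L G c1) by (apply Rdiv_lt_0_compat; lra).
    assert (0 < Kc * F1 1) by nra.
    exists (2 * ln 2 / L G c1 + Kc * F1 1). intros x Hx.
    pose proof (hf1 x ltac:(lra)) as Hfx.
    destruct (floor2 x ltac:(lra)) as [m [Hm1 Hm2]].
    destruct m as [|m']. { simpl in Hm2; lra. }
    set (m := S m') in *.
    assert (HmR : 1 <= INR m) by (unfold m; rewrite S_INR; pose proof (pos_INR m'); lra).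
    assert (Hl : INR m * ln 2 <= ln x).
    { rewrite <- ln_pow by lra. apply ln_le; [apply pow_lt; lra| lra]. }
    assert (Hl2 : ln x < INR (S m) * ln 2).
    { rewrite <- ln_pow by lra. apply ln_increasing; lra. }
    rewrite S_INR in Hl2.
    assert (Hl3 : ln 2 <= ln x) by (apply ln_le; lra).
    split.
    + rewrite Rabs_pos_eq by lra.
      pose proof (lowerlog _ _ _ _ _ H m x Hm1) as HLo.
      assert (ln x <= 2 * ln 2 / L G c1 * (INR m * L G c1)).
      { replace (2 * ln 2 / L G c1 * (INR m * L G c1)) with (2 * INR m * ln 2) by (field; lra). nra. }
      assert (2 * ln 2 / L G c1 * (INR m * L G c1) <= 2 * ln 2 / L G c1 * F1 x) by (apply Rmult_le_compat_l; lra).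
      assert (0 <= Kc * F1 1 * F1 x) by nra. nra.
    + rewrite Rabs_pos_eq by lra.
      pose proof (upperpow _ _ _ _ _ H (S m) x ltac:(lra) ltac:(lra)) as HU. fold Kc in HU.
      assert (HKm : Kc ^ m <= Rpower x (ln Kc / ln 2)).
      { rewrite <- Rpower_pow by lra.
        apply Rle_trans with (Rpower (2 ^ m) (ln Kc / ln 2)).
        - unfold Rpower. rewrite ln_pow by lra. right. f_equal. field. lra.
        - apply Rle_Rpower_l. apply Rmult_le_pos; [lra|]. apply Rlt_le, Rinv_0_lt_compat; lra.
          split; [apply pow_lt; lra|lra]. }
      assert (0 < Rpower x (ln Kc / ln 2)) by (unfold Rpower; apply exp_pos).
      replace (Kc ^ S m * F1 1) with (Kc * F1 1 * Kc ^ m) in HU by (simpl; ring).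
      assert (Kc * F1 1 * Kc ^ m <= Kc * F1 1 * Rpower x (ln Kc / ln 2)) by (apply Rmult_le_compat_l; lra).
      assert (0 <= 2 * ln 2 / L G c1 * Rpower x (ln Kc / ln 2)) by nra. nra.
  - exists (K c2 + c2 + 1 / c1 + 1). intros x a b Hx Hxa Hab Hb.
    assert (0 < 1 / c1) by (apply Rdiv_lt_0_compat; lra).
    assert (1 <= K c2) by (unfold K; nra).
    destruct (hM1 _ _ _ _ _ H a b ltac:(lra) Hab) as [c [Hc E1]].
    destruct (hM2 _ _ _ _ _ H a b ltac:(lra) Hab) as [e [He E2]].
    pose proof (mono _ _ _ _ _ H x c Hx ltac:(lra)).
    pose proof (upperiii _ _ _ _ _ H x c Hx ltac:(lra) ltac:(lra)).
    destruct (HD x e Hx ltac:(lra) ltac:(lra)) as [B1 B2].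
    pose proof (hf1 x Hx). pose proof (hf2 x Hx).
    set (d := b - a) in *. assert (0 <= d) by (unfold d; lra).
    rewrite E1, E2.
    assert (F1 c * d <= K c2 * F1 x * d) by (apply Rmult_le_compat_r; lra).
    assert (F1 x * d <= F1 c * d) by (apply Rmult_le_compat_r; lra).
    assert (G e * d <= c2 * G x * d) by (apply Rmult_le_compat_r; lra).
    assert (c1 * G x * d <= G e * d) by (apply Rmult_le_compat_r; lra).
    assert (G x * d <= 1 / c1 * (G e * d)).
    { apply (Rmult_le_reg_l c1); [lra|]. replace (c1 * (1 / c1 * (G e * d))) with (G e * d) by (field; lra). lra. }
    assert (0 <= F1 x * d) by (apply Rmult_le_pos; lra).
    assert (0 <= G x * d) by (apply Rmult_le_pos; lra).
    assert (0 <= F1 c * d) by lra. assert (0 <= G e * d) by (apply Rmult_le_pos; [apply Rlt_le, hf2|]; lra).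
    repeat rewrite Rabs_pos_eq by lra.
    split; [|split; [|split]]; nra.
Qed.
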